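(* Let $D$ be an AV-domain with quotient field $K$ and let $L$ be a subfield of $K$. Then $D\cap L$ is an AV-domain. Moreover, if $M$ denotes the quotient field of $D\cap L$, then $\overline{D}\cap M$ is a valuation domain with quotient field $M$, and the integral closures of $D\cap L$ and of $D\cap M$ (in $M$) both equal $\overline{D}\cap M$.
   Context: An integral domain $D$ is an AV-domain if for all nonzero $a,b\in D$ there is a natural number $n$ with $a^n\mid b^n$ or $b^n\mid a^n$ in $D$. $\overline{D}$ denotes the integral closure of $D$ in $K$. *)

(* Defs.v *)
From mathcomp Require Import all_boot all_algebra.
Set Implicit Arguments. Unset Strict Implicit. Unset Printing Implicit Defensive.
Import GRing.Theory.
Local Open Scope ring_scope.

Section Defs.
Variable K : fieldType.

(* A is a subring (with 1) of K; being inside a field it is an integral domain *)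
Definition is_subring (A : K -> Prop) : Prop :=
  [/\ A 0, A 1, (forall x y, A x -> A y -> A (x - y)) &
      (forall x y, A x -> A y -> A (x * y))].

Definition is_subfield (F : K -> Prop) : Prop :=
  is_subring F /\ (forall x, F x -> x != 0 -> F x^-1).

Definition inter (A B : K -> Prop) : K -> Prop := fun x => A x /\ B x.

Definition dvd_in (A : K -> Prop) (a b : K) : Prop := exists2 c, A c & b = a * c.

Definition AV_domain (A : K -> Prop) : Prop :=
  forall a b, A a -> A b -> a != 0 -> b != 0 ->
    exists2 n : nat, (0 < n)%N &
      (dvd_in A (a ^+ n) (b ^+ n) \/ dvd_in A (b ^+ n) (a ^+ n)).

Definition quot_field (A : K -> Prop) : K -> Prop :=
  fun x => exists a b, [/\ A a, A b, b != 0 & x = a / b].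

Definition has_quot_field (A F : K -> Prop) : Prop :=
  forall x, F x <-> quot_field A x.

Definition integral_over (A : K -> Prop) (x : K) : Prop :=
  exists p : {poly K}, [/\ p \is monic, (forall i, A p`_i) & root p x].

Definition integral_closure_in (A F : K -> Prop) : K -> Prop :=
  fun x => F x /\ integral_over A x.

Definition valuation_domain (V : K -> Prop) : Prop :=
  is_subring V /\
  forall x, quot_field V x -> x != 0 -> V x \/ V x^-1.

End Defs.

(* Main.v *)
From HB Require Import structures.
Require Import Defs.
From mathcomp Require Import all_boot all_algebra ring.
From Stdlib Require Import ClassicalEpsilon.
Import GRing.Theory.
Local Open Scope ring_scope.

Section Int.
Variables (K : fieldType) (D : K -> Prop) (hD : is_subring D).

Definition Db (x : K) : bool := if excluded_middle_informative (D x) then true else false.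
Lemma DbP x : reflect (D x) (Db x).
Proof. rewrite /Db; case: excluded_middle_informative => h; constructor; done. Qed.

Fact Db_closed : subring_closed Db.
Proof.
case: hD => D0 D1 DB DM; split; first exact/DbP.
  by move=> x y /DbP ? /DbP ?; apply/DbP; apply: DB.
by move=> x y /DbP ? /DbP ?; apply/DbP; apply: DM.
Qed.
HB.instance Definition _ := GRing.isSubringClosed.Build K Db Db_closed.
Record DT := MkDT { dval : K; _ : Db dval }.
HB.instance Definition _ := [isSub for dval].
HB.instance Definition _ := [Choice of DT by <:].
HB.instance Definition _ := [SubChoice_isSubComNzRing of DT by <:].

Lemma intE x : integral_over D x <-> integralOver (val : {rmorphism DT -> K}) x.
Proof.
split.
  case=> p [mp cp rp].
  pose q : {poly DT} := \poly_(i < size p) insubd (0 : DT) p`_i.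
  have qE : map_poly val q = p.
    apply/polyP=> i; rewrite coef_map coef_poly.
    case: ltnP => hi /=; first by rewrite insubdK //; apply/DbP.
    by rewrite nth_default.
  exists q; last by rewrite qE.
  rewrite monicE; apply/eqP; apply: val_inj.
  by rewrite -lead_coef_map_inj ?qE ?rmorph1 ?(monicP mp) //; exact: val_inj.
case=> q mq rq; exists (map_poly val q); split => //.
  by rewrite monic_map.
by move=> i; rewrite coef_map /=; apply/DbP; apply: valP.
Qed.

Lemma int_sub x y : integral_over D x -> integral_over D y -> integral_over D (x - y).
Proof. by move=> /intE hx /intE hy; apply/intE; apply: integral_sub. Qed.
Lemma int_mul x y : integral_over D x -> integral_over D y -> integral_over D (x * y).
Proof. by move=> /intE hx /intE hy; apply/intE; apply: integral_mul. Qed.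
End Int.

Section Main.
Variable K : fieldType.
Implicit Types (A : K -> Prop) (x y : K).

Lemma sr_neg A x : is_subring A -> A x -> A (- x).
Proof. by case=> A0 _ AB _ Ax; rewrite -sub0r; apply: AB. Qed.
Lemma sr_add A x y : is_subring A -> A x -> A y -> A (x + y).
Proof.
move=> hA Ax Ay; rewrite -[y]opprK; case: (hA) => _ _ AB _; apply: AB => //.
exact: sr_neg.
Qed.
Lemma sr_mul A x y : is_subring A -> A x -> A y -> A (x * y).
Proof. by case=> _ _ _ AM; apply: AM. Qed.
Lemma sr_sub A x y : is_subring A -> A x -> A y -> A (x - y).
Proof. by case=> _ _ AB _; apply: AB. Qed.
Lemma sr_pow A x n : is_subring A -> A x -> A (x ^+ n).
Proof.
move=> hA Ax; elim: n => [|n IH]; first by case: hA.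
by rewrite exprS; apply: sr_mul.
Qed.
Lemma sr_sum A n (F : 'I_n -> K) : is_subring A -> (forall i, A (F i)) ->
  A (\sum_(i < n) F i).
Proof.
move=> hA hF; apply: (big_ind A); first by case: hA.
  by move=> ? ?; apply: sr_add.
by move=> i _; apply: hF.
Qed.

Lemma int_of_pow A x n : is_subring A -> (0 < n)%N -> A (x ^+ n) -> integral_over A x.
Proof.
move=> hA n0 Axn; exists ('X^n - (x ^+ n)%:P); split.
- exact: monicXnsubC.
- move=> i; rewrite coefB coefXn coefC; apply: sr_sub => //.
    by case: (i == n)%N; case: hA.
  by case: (i == 0)%N => //; case: hA.
- by rewrite /root !hornerE subrr.
Qed.

Lemma int_of_in A x : is_subring A -> A x -> integral_over A x.
Proof. by move=> hA Ax; apply: (@int_of_pow A x 1) => //; rewrite expr1. Qed.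

Lemma int_mono A B x : (forall y, A y -> B y) -> integral_over A x -> integral_over B x.
Proof. by move=> AB [p [mp cp rp]]; exists p; split => // i; apply: AB. Qed.

Lemma int_pow A x n : is_subring A -> integral_over A x -> integral_over A (x ^+ n).
Proof.
move=> hA hx; elim: n => [|n IH]; first by apply: int_of_in => //; case: hA.
by rewrite exprS; apply: int_mul.
Qed.

Lemma unit_lemma A y d : is_subring A -> integral_over A y -> A d -> y * d = 1 -> A y.
Proof.
move=> hA [p [mp cp rp]] Ad hyd.
move/rootP: rp; rewrite horner_coef.
case E: (size p) => [|[|k]].
- by move: (monic_neq0 mp); rewrite -size_poly_eq0 E.
- have hl : p`_0 = 1 by rewrite -(monicP mp) lead_coefE E.
  by rewrite big_ord1 hl expr0 mulr1 => /eqP; rewrite oner_eq0.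
have hl : p`_k.+1 = 1 by rewrite -(monicP mp) lead_coefE E.
rewrite big_ord_recr /= hl mul1r => /eqP; rewrite addrC addr_eq0 => /eqP e2.
set S := \sum_(i < k.+1) _ in e2.
have e1 : y = y ^+ k.+1 * d ^+ k by rewrite exprS -mulrA -exprMn hyd expr1n mulr1.
have e3 : S * d ^+ k = \sum_(i < k.+1) p`_i * d ^+ (k - i).
  rewrite mulr_suml; apply: eq_bigr => i _.
  have hi : (i <= k)%N by rewrite -ltnS ltn_ord.
  have -> : d ^+ k = d ^+ (k - i) * d ^+ i by rewrite -exprD subnK.
  have -> : p`_i * y ^+ i * (d ^+ (k - i) * d ^+ i) = p`_i * d ^+ (k - i) * (y * d) ^+ i.
    by rewrite exprMn; ring.
  by rewrite hyd expr1n mulr1.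
rewrite e1 e2 mulNr e3; apply: sr_neg => //; apply: sr_sum => // i.
by apply: sr_mul => //; apply: sr_pow.
Qed.

Lemma AV_root (D : K -> Prop) x : is_subring D -> has_quot_field D (fun _ => True) ->
  AV_domain D -> x != 0 ->
  exists2 n, (0 < n)%N & (D (x ^+ n) \/ D (x^-1 ^+ n)).
Proof.
move=> hD hK hAV x0.
have [/(_ I) [a [b [Da Db b0 ex]]] _] := hK x.
have a0 : a != 0 by apply: contra x0 => /eqP a0; rewrite ex a0 mul0r.
have [n n0 [[c Dc e] | [c Dc e]]] := hAV a b Da Db a0 b0; exists n => //.
- right; rewrite ex invf_div expr_div_n e mulrC mulKf //; exact: expf_neq0.
- left; rewrite ex expr_div_n e mulrC mulKf //; exact: expf_neq0.
Qed.

Lemma int_root (D : K -> Prop) x : is_subring D -> has_quot_field D (fun _ => True) ->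
  AV_domain D -> x != 0 -> integral_over D x -> exists2 n, (0 < n)%N & D (x ^+ n).
Proof.
move=> hD hK hAV x0 hx.
have [n n0 [h | h]] := AV_root _ _ hD hK hAV x0; exists n => //.
apply: (unit_lemma _ _ _ hD (int_pow _ _ n hD hx) h).
by rewrite -exprMn mulfV // expr1n.
Qed.

Lemma Q_of A a : is_subring A -> A a -> quot_field A a.
Proof. by move=> hA Aa; exists a, 1; split => //; [case: hA | rewrite oner_eq0 | rewrite divr1]. Qed.

Lemma Q_sub A x y : is_subring A -> quot_field A x -> quot_field A y -> quot_field A (x - y).
Proof.
move=> hA [a [b [Aa Ab b0 ->]]] [c [d [Ac Ad d0 ->]]].
exists (a * d - c * b), (b * d); split.
- by apply: sr_sub => //; apply: sr_mul.
- exact: sr_mul.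
- exact: mulf_neq0.
- by field; rewrite b0 d0.
Qed.

Lemma Q_mul A x y : is_subring A -> quot_field A x -> quot_field A y -> quot_field A (x * y).
Proof.
move=> hA [a [b [Aa Ab b0 ->]]] [c [d [Ac Ad d0 ->]]].
exists (a * c), (b * d); split.
- exact: sr_mul.
- exact: sr_mul.
- exact: mulf_neq0.
- by field; rewrite b0 d0.
Qed.

Lemma Q_div A x y : is_subring A -> quot_field A x -> quot_field A y -> y != 0 ->
  quot_field A (x / y).
Proof.
move=> hA [a [b [Aa Ab b0 ->]]] [c [d [Ac Ad d0 ey]]] y0.
have c0 : c != 0 by apply: contra y0 => /eqP c0; rewrite ey c0 mul0r.
rewrite ey.
exists (a * d), (b * c); split.
- exact: sr_mul.
- exact: sr_mul.
- exact: mulf_neq0.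
- by field; rewrite b0 d0 c0.
Qed.

End Main.

Theorem theorem2 (K : fieldType) (D L : K -> Prop) :
  is_subring D -> has_quot_field D (fun _ => True) -> AV_domain D ->
  is_subfield L ->
  let DL := inter D L in
  let M := quot_field DL in
  let Dbar := integral_closure_in D (fun _ => True) in
  [/\ AV_domain DL,
      valuation_domain (inter Dbar M),
      has_quot_field (inter Dbar M) M,
      (forall x, integral_closure_in DL M x <-> inter Dbar M x) &
      (forall x, integral_closure_in (inter D M) M x <-> inter Dbar M x)].
Proof.
move=> hD hK hAV hL DL M Dbar.
case: (hL) => hLs hLinv.
have hDL : is_subring DL.
  case: (hD) => D0 D1 DB DM; case: (hLs) => L0 L1 LB LM.
  split; [by split | by split | |].
    by move=> x y [? ?] [? ?]; split; [apply: DB | apply: LB].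
  by move=> x y [? ?] [? ?]; split; [apply: DM | apply: LM].
have ML : forall x, M x -> L x.
  move=> x [a [b [[_ La] [_ Lb] b0 ->]]]; apply: sr_mul => //.
  exact: hLinv.
have M0 : M 0 by apply: Q_of => //; case: hDL.
have M1 : M 1 by apply: Q_of => //; case: hDL.
have hM : is_subring M.
  split => // x y Mx My; [exact: Q_sub | exact: Q_mul].
have Mdiv : forall x y, M x -> M y -> y != 0 -> M (x / y).
  by move=> x y Mx My y0; apply: Q_div.
have hDbM : is_subring (inter Dbar M).
  split.
  - by split => //; split => //; apply: int_of_in => //; case: hD.
  - by split => //; split => //; apply: int_of_in => //; case: hD.
  - move=> x y [[_ ix] Mx] [[_ iy] My]; split; last exact: Q_sub.
    by split => //; apply: int_sub.
  - move=> x y [[_ ix] Mx] [[_ iy] My]; split; last exact: Q_mul.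
    by split => //; apply: int_mul.
have intA : forall A, is_subring A -> (forall y, A y -> D y) ->
    (forall y, D y -> M y -> A y) -> forall x, M x -> integral_over D x ->
    integral_over A x.
  move=> A hA AD DMA x Mx ix.
  have [-> | x0] := eqVneq x 0; first by apply: int_of_in => //; case: hA.
  have [n n0 Dxn] := int_root _ D x hD hK hAV x0 ix.
  by apply: (@int_of_pow _ A x n) => //; apply: DMA => //; apply: sr_pow.
split.
- move=> a b [Da La] [Db Lb] a0 b0.
  have [n n0 [[c Dc e] | [c Dc e]]] := hAV a b Da Db a0 b0; exists n => //.
    left; exists c => //; split => //.
    have -> : c = b ^+ n / a ^+ n.
      by apply/esym; rewrite e [a ^+ n * c]mulrC mulfK //; exact: expf_neq0.
    apply: sr_mul => //; first exact: sr_pow.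
    by apply: hLinv; [apply: sr_pow | apply: expf_neq0].
  right; exists c => //; split => //.
  have -> : c = a ^+ n / b ^+ n.
    by apply/esym; rewrite e [b ^+ n * c]mulrC mulfK //; exact: expf_neq0.
  apply: sr_mul => //; first exact: sr_pow.
  by apply: hLinv; [apply: sr_pow | apply: expf_neq0].
- split => // x [a [b [[_ Ma] [_ Mb] b0 ->]]] x0.
  have Mx := Mdiv a b Ma Mb b0.
  have [n n0 [h | h]] := AV_root _ D _ hD hK hAV x0.
    by left; split => //; split => //; apply: (@int_of_pow _ D _ n).
  right; split; first by split => //; apply: (@int_of_pow _ D _ n).
  by rewrite -div1r; apply: Mdiv.
- move=> x; split.
    move=> Mx; case: (Mx) => a [b [DLa DLb b0 ->]].
    exists a, b; split => //.
      split; last exact: Q_of.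
      by split => //; apply: int_of_in => //; case: DLa.
    split; last exact: Q_of.
    by split => //; apply: int_of_in => //; case: DLb.
  by move=> [a [b [[_ Ma] [_ Mb] b0 ->]]]; apply: Mdiv.
- move=> x; split.
    move=> [Mx ix]; split => //; split => //.
    by apply: int_mono ix => y [].
  move=> [[_ ix] Mx]; split => //; apply: intA => //.
  + by move=> y [].
  + by move=> y Dy My; split => //; apply: ML.
- move=> x; split.
    move=> [Mx ix]; split => //; split => //.
    by apply: int_mono ix => y [].
  move=> [[_ ix] Mx]; split => //; apply: intA => //.
  + case: (hD) => D0 D1 DB DM.
    split; [by split | by split | |].
      by move=> u v [? ?] [? ?]; split; [apply: DB | apply: Q_sub].
    by move=> u v [? ?] [? ?]; split; [apply: DM | apply: Q_mul].
  + by move=> y [].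
Qed.
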